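(* Consider the plant $x_{k+1}=f(x_k,u_k)$ and the sets, symbolic model, $\widetilde P_S$ and $\widetilde C$ described in the context, with $\varepsilon\ge\eta_x$. Let $P_S=\{x\in X_S:\exists\tilde x\in\widetilde P_S,\ \|\tilde x-x\|\le\varepsilon\}$ and define the self-triggered controller, for $x\in P_S$, $$C(x)=\bigcup\{\widetilde C(\tilde x):\ \tilde x\in\mathsf{Nearest}_{\widetilde P_S}(x)\}.$$ If $X_0\subseteq P_S$, then $C$ is valid for the plant with specification $(X_S,X_F)$: for every $x_0\in X_0$ and every controlled trajectory $x_0,x_1,\dots$ induced by $C$ (with communication times $k_0=0<k_1<\cdots$), there exists $N\in\mathbb{N}_{\ge0}$ such that $x_{k_N}\in X_F$ and $x_k\in X_S$ for all $k\in\{0,1,\dots,k_N\}$.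
   Context: Standing setup: plant $x_{k+1}=f(x_k,u_k)$ with $f:\mathbb{R}^{n_x}\times\mathbb{R}^{n_u}\to\mathbb{R}^{n_x}$, compact initial set $X_0$, compact input set $U$, and $L_x\ge0$ with $\|f(x_1,u)-f(x_2,u)\|\le L_x\|x_1-x_2\|$ for all $x_1,x_2\in\mathbb{R}^{n_x}$, $u\in U$. Compact (possibly non-convex) safety set $X_S$ and target set $X_F$ with $X_0\subseteq X_S$, $X_F\subseteq X_S$. $\|\cdot\|$ Euclidean norm; $\mathcal{B}_r(y)=\{y':\|y'-y\|\le r\}$; $\mathsf{Int}_\varepsilon(Y)=\{y\in Y:\mathcal{B}_\varepsilon(y)\subseteq Y\}$; $\mathsf{Nearest}_Y(x)=\arg\min_{y\in Y}\|x-y\|$. $\phi(x,u,m)$ is the state reached from $x$ by applying $u$ constantly for $m\ge1$ steps of $x_{k+1}=f(x_k,u)$. Lattice: $[Y]_\eta=\{y\in Y: y_i=\frac{2\eta}{\sqrt n}a_i,\ a_i\in\mathbb{Z}\}$. Symbolic model for $\eta_x,\eta_u>0$, $M_{\max}\in\mathbb{N}_{>0}$, $\varepsilon\ge\eta_x$: $\widetilde X=[\mathbb{R}^{n_x}]_{\eta_x}$, $\widetilde X_0=[X_0]_{\eta_x}$, $\widetilde U=[U]_{\eta_u}$, $\widetilde M=\{1,\dots,M_{\max}\}$; $\tilde x^+\in\widetilde G_A(\tilde x,\tilde u,\tilde m)$ iff $\tilde x^+\in\widetilde X$ and $\|\tilde x^+-\phi(\tilde x,\tilde u,\tilde m)\|\le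 L_x^{\tilde m}\varepsilon+\eta_x$; $(\tilde x_1,\dots,\tilde x_{\tilde m})\in\widetilde O_A(\tilde x,\tilde u,\tilde m)$ iff $\tilde x_p\in\widetilde G_A(\tilde x,\tilde u,p)$ for $p=1,\dots,\tilde m$. Let $\widetilde X_S=[\mathsf{Int}_\varepsilon(X_S)]_{\eta_x}$, $\widetilde X_F=[\mathsf{Int}_\varepsilon(X_F)]_{\eta_x}$; $\widetilde O_A(\cdot)\subseteq\widetilde X_S^*$ means every sequence in it has all entries in $\widetilde X_S$. $\mathrm{Pre}(P)=\{\tilde x\in\widetilde X_S:\exists(\tilde u,\tilde m)\in\widetilde U\times\widetilde M$ with $\widetilde G_A(\tilde x,\tilde u,\tilde m)\subseteq P$ and $\widetilde O_A(\tilde x,\tilde u,\tilde m)\subseteq\widetilde X_S^*\}$ for $P\subseteq\widetilde X_S$. $P^{(0)}=\widetilde X_F$, $P^{(n+1)}=P^{(n)}\cup\mathrm{Pre}(P^{(n)})$ iterated to a fixed point $\widetilde P_S$. $\mathcal{L}(\tilde x)=0$ on $\widetilde X_F$, $\mathcal{L}(\tilde x)=n+1$ on $P^{(n+1)}\setminus P^{(n)}$, $\mathcal{L}=\infty$ on $\widetilde X_S\setminus\widetilde P_S$. For $\tilde x\in\widetilde P_S$: $\widetilde C(\tilde x)=\{(\tilde u,\tilde m)\in\widetilde U\times\widetilde M:\mathcal{L}(\tilde x^+)<\mathcal{L}(\tilde x)\ \forall\tilde x^+\in\widetilde G_A(\tilde x,\tilde u,\tilde m),\ \widetilde O_A(\tilde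 x,\tilde u,\tilde m)\subseteq\widetilde X_S^*\}$. Self-triggered execution / controlled trajectory induced by $C$: $x_0\in X_0$, $k_0=0$; at each communication time $k_\ell$ a pair $(u_{k_\ell},m_\ell)\in C(x_{k_\ell})$ is chosen, $u_k=u_{k_\ell}$ for $k=k_\ell,\dots,k_{\ell+1}-1$, $x_{k+1}=f(x_k,u_{k_\ell})$, and $k_{\ell+1}=k_\ell+m_\ell$. *)

(* Defs.v *)
From mathcomp Require Import ssreflect ssrfun ssrbool eqtype ssrnat seq fintype bigop.
From Stdlib Require Import Reals ZArith ClassicalEpsilon.
Open Scope R_scope.

Definition vec (n : nat) : Type := 'I_n -> R.

Definition vnorm {n : nat} (v : vec n) : R :=
  sqrt (\big[Rplus/0%R]_(i < n) (v i * v i)).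
Definition vdist {n : nat} (x y : vec n) : R := vnorm (fun i => x i - y i).

Definition compact_set {n : nat} (A : vec n -> Prop) : Prop :=
  forall u : nat -> vec n, (forall k, A (u k)) ->
  exists (sub : nat -> nat) (l : vec n),
    (forall k, Peano.lt (sub k) (sub (S k))) /\ A l /\
    (forall e, 0 < e -> exists N, forall k, Peano.le N k -> vdist (u (sub k)) l < e).

Definition Int_eps {n : nat} (eps : R) (Y : vec n -> Prop) (y : vec n) : Prop :=
  Y y /\ (forall y', vdist y' y <= eps -> Y y').

Definition lattice {n : nat} (eta : R) (Y : vec n -> Prop) (y : vec n) : Prop :=
  Y y /\ (forall i : 'I_n, exists a : Z, y i = 2 * eta / sqrt (INR n) * IZR a).

Definition phi {nx nu : nat} (f : vec nx -> vec nu -> vec nx)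
  (x : vec nx) (u : vec nu) (m : nat) : vec nx :=
  Nat.iter m (fun y => f y u) x.

Definition GA {nx nu : nat} (f : vec nx -> vec nu -> vec nx) (Lx etax eps : R)
  (x : vec nx) (u : vec nu) (m : nat) (xp : vec nx) : Prop :=
  lattice etax (fun _ => True) xp /\
  vdist xp (phi f x u m) <= Lx ^ m * eps + etax.

(* O_A(x,u,m) \subseteq Y^* : every sequence (x_1,..,x_m) with x_p in G_A(x,u,p)
   has all its entries in Y *)
Definition OA_sub {nx nu : nat} (f : vec nx -> vec nu -> vec nx) (Lx etax eps : R)
  (x : vec nx) (u : vec nu) (m : nat) (Y : vec nx -> Prop) : Prop :=
  forall s : nat -> vec nx,
    (forall p, Peano.le 1 p -> Peano.le p m -> GA f Lx etax eps x u p (s p)) ->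
    forall p, Peano.le 1 p -> Peano.le p m -> Y (s p).

Definition XtS {nx : nat} (etax eps : R) (XS : vec nx -> Prop) : vec nx -> Prop :=
  lattice etax (Int_eps eps XS).
Definition XtF {nx : nat} (etax eps : R) (XF : vec nx -> Prop) : vec nx -> Prop :=
  lattice etax (Int_eps eps XF).

Definition Pre {nx nu : nat} (f : vec nx -> vec nu -> vec nx) (Lx etax etau eps : R)
  (Mmax : nat) (U XS : vec _ -> Prop) (P : vec nx -> Prop) (x : vec nx) : Prop :=
  XtS etax eps XS x /\
  exists (u : vec nu) (m : nat),
    lattice etau U u /\ Peano.le 1 m /\ Peano.le m Mmax /\
    (forall xp, GA f Lx etax eps x u m xp -> P xp) /\
    OA_sub f Lx etax eps x u m (XtS etax eps XS).

Fixpoint Piter {nx nu : nat} (f : vec nx -> vec nu -> vec nx) (Lx etax etau eps : R)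
  (Mmax : nat) (U : vec nu -> Prop) (XS XF : vec nx -> Prop) (k : nat) : vec nx -> Prop :=
  match k with
  | O => XtF etax eps XF
  | S k' => fun x => Piter f Lx etax etau eps Mmax U XS XF k' x \/
                     Pre f Lx etax etau eps Mmax U XS (Piter f Lx etax etau eps Mmax U XS XF k') x
  end.

(* the fixed point P~_S of the (monotone) iteration = union of all P^(k) *)
Definition PtS {nx nu : nat} (f : vec nx -> vec nu -> vec nx) (Lx etax etau eps : R)
  (Mmax : nat) (U : vec nu -> Prop) (XS XF : vec nx -> Prop) (x : vec nx) : Prop :=
  exists k, Piter f Lx etax etau eps Mmax U XS XF k x.

(* level function L: the index k at which x enters P^(k) (Some 0 on X~_F,
   Some (k+1) on P^(k+1) \ P^(k)), None (= infinity) if never *)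
Definition level {nx : nat} (P : nat -> vec nx -> Prop) (x : vec nx) : option nat :=
  match excluded_middle_informative (exists k, P k x) with
  | left _ => Some (epsilon (inhabits 0%nat)
                     (fun k => P k x /\ forall j, P j x -> Peano.le k j))
  | right _ => None
  end.

Definition lvl_lt (a b : option nat) : Prop :=
  match a, b with
  | Some a', Some b' => Peano.lt a' b'
  | Some _, None => True
  | None, _ => False
  end.

Definition Ctil {nx nu : nat} (f : vec nx -> vec nu -> vec nx) (Lx etax etau eps : R)
  (Mmax : nat) (U : vec nu -> Prop) (XS XF : vec nx -> Prop)
  (xt : vec nx) (u : vec nu) (m : nat) : Prop :=
  PtS f Lx etax etau eps Mmax U XS XF xt /\
  lattice etau U u /\ Peano.le 1 m /\ Peano.le m Mmax /\
  (forall xp, GA f Lx etax eps xt u m xp ->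
     lvl_lt (level (Piter f Lx etax etau eps Mmax U XS XF) xp)
            (level (Piter f Lx etax etau eps Mmax U XS XF) xt)) /\
  OA_sub f Lx etax eps xt u m (XtS etax eps XS).

Definition PS {nx nu : nat} (f : vec nx -> vec nu -> vec nx) (Lx etax etau eps : R)
  (Mmax : nat) (U : vec nu -> Prop) (XS XF : vec nx -> Prop) (x : vec nx) : Prop :=
  XS x /\ exists xt, PtS f Lx etax etau eps Mmax U XS XF xt /\ vdist xt x <= eps.

Definition Nearest {n : nat} (Y : vec n -> Prop) (x y : vec n) : Prop :=
  Y y /\ forall y', Y y' -> vdist x y <= vdist x y'.

Definition Cctrl {nx nu : nat} (f : vec nx -> vec nu -> vec nx) (Lx etax etau eps : R)
  (Mmax : nat) (U : vec nu -> Prop) (XS XF : vec nx -> Prop)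
  (x : vec nx) (u : vec nu) (m : nat) : Prop :=
  PS f Lx etax etau eps Mmax U XS XF x /\
  exists xt, Nearest (PtS f Lx etax etau eps Mmax U XS XF) x xt /\
             Ctil f Lx etax etau eps Mmax U XS XF xt u m.

(* communication round l is executed: T = None means infinitely many rounds,
   T = Some t means rounds 0..t-1 are executed and then the controller offers
   no admissible pair at x_{k_t} (the execution cannot be continued) *)
Definition executed (T : option nat) (l : nat) : Prop :=
  match T with None => True | Some t => Peano.lt l t end.

Definition controlled_traj {nx nu : nat} (f : vec nx -> vec nu -> vec nx)
  (C : vec nx -> vec nu -> nat -> Prop) (X0 : vec nx -> Prop)
  (x : nat -> vec nx) (kk : nat -> nat) (us : nat -> vec nu) (ms : nat -> nat)
  (T : option nat) : Prop :=
  X0 (x 0%nat) /\ kk 0%nat = 0%nat /\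
  (forall l, executed T l ->
     C (x (kk l)) (us l) (ms l) /\
     kk (S l) = (kk l + ms l)%nat /\
     (forall k, Peano.le (kk l) k -> Peano.lt k (kk (S l)) -> x (S k) = f (x k) (us l))) /\
  (forall t, T = Some t -> forall u m, ~ C (x (kk t)) u m).

Definition valid {nx nu : nat} (f : vec nx -> vec nu -> vec nx)
  (C : vec nx -> vec nu -> nat -> Prop) (X0 XS XF : vec nx -> Prop) : Prop :=
  forall x kk us ms T, controlled_traj f C X0 x kk us ms T ->
  exists N : nat,
    (forall t, T = Some t -> Peano.le N t) /\
    XF (x (kk N)) /\
    (forall k, Peano.le k (kk N) -> XS (x k)).

(* Main.v *)
Require Import Defs.
From HB Require Import structures.
From mathcomp Require Import ssreflect ssrfun ssrbool eqtype ssrnat seq fintype bigop finfun zify.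
From Stdlib Require Import Reals ZArith ClassicalEpsilon Lra Lia Classical FunctionalExtensionality.
Open Scope R_scope.
Set Implicit Arguments.

Lemma Rplus_assoc' : associative Rplus. Proof. intros a b c; ring. Qed.
HB.instance Definition _ := Monoid.isComLaw.Build R 0 Rplus Rplus_assoc' Rplus_comm Rplus_0_l.

Notation SUM n F := (\big[Rplus/0]_(i < n) F i).

Lemma sum_le n (F G : 'I_n -> R) : (forall i, F i <= G i) -> SUM n F <= SUM n G.
Proof.
move=> H; apply: (big_ind2 (fun a b => a <= b)); [lra | intros; lra | auto].
Qed.

Lemma sum_ge0 n (F : 'I_n -> R) : (forall i, 0 <= F i) -> 0 <= SUM n F.
Proof.
move=> H; apply: (big_ind (fun a => 0 <= a)); [lra | intros; lra | auto].
Qed.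

Lemma sum_scal n c (F : 'I_n -> R) : SUM n (fun i => c * F i) = c * SUM n F.
Proof.
apply: (big_ind2 (fun a b => a = c * b)); [ring | intros; subst; ring | auto].
Qed.

Lemma sum_add n (F G : 'I_n -> R) : SUM n (fun i => F i + G i) = SUM n F + SUM n G.
Proof. by rewrite big_split. Qed.

Lemma sum_ext n (F G : 'I_n -> R) : (forall i, F i = G i) -> SUM n F = SUM n G.
Proof. move=> H; by apply: eq_bigr. Qed.

Lemma sum_const n c : SUM n (fun _ => c) = INR n * c.
Proof.
rewrite big_const_ord. elim: n => [|n IH]. simpl; ring.
rewrite S_INR iterS IH. ring.
Qed.

Lemma sum_single n (F : 'I_n -> R) j : (forall i, 0 <= F i) -> F j <= SUM n F.
Proof.
move=> H. rewrite (bigD1 j) //=.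
have : 0 <= \big[Rplus/0]_(i < n | i != j) F i.
  apply: (big_ind (fun a => 0 <= a)); [lra | intros; lra | auto].
move=> Hr. rewrite -{1}(Rplus_0_r (F j)). apply Rplus_le_compat_l. exact Hr.
Qed.

Lemma sq_ge0 a : 0 <= a * a. Proof. nra. Qed.

Lemma vnorm_ge0 n (v : vec n) : 0 <= vnorm v.
Proof. apply sqrt_pos. Qed.

Lemma coord_le n (v : vec n) i : Rabs (v i) <= vnorm v.
Proof.
rewrite /vnorm. rewrite -(sqrt_Rsqr_abs (v i)). apply sqrt_le_1_alt.
rewrite /Rsqr. refine (sum_single (fun k => v k * v k) i _). move=> k; apply sq_ge0.
Qed.

Lemma cauchy n (v w : vec n) :
  SUM n (fun i => v i * w i) <= sqrt (SUM n (fun i => v i * v i)) * sqrt (SUM n (fun i => w i * w i)).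
Proof.
set A := SUM n (fun i => v i * v i).
set B := SUM n (fun i => v i * w i).
set C := SUM n (fun i => w i * w i).
have Hq : forall t, 0 <= A + 2 * t * B + t * t * C.
  move=> t.
  have -> : A + 2 * t * B + t * t * C = SUM n (fun i => (v i + t * w i) * (v i + t * w i)).
    rewrite (sum_ext (fun i => (v i + t * w i) * (v i + t * w i))
              (fun i => v i * v i + ((2 * t) * (v i * w i) + (t * t) * (w i * w i)))); last by move=> i; ring.
    rewrite !sum_add !sum_scal. rewrite /A /B /C. ring.
  apply sum_ge0 => i; apply sq_ge0.
have HA : 0 <= A by apply sum_ge0 => i; apply sq_ge0.
have HC : 0 <= C by apply sum_ge0 => i; apply sq_ge0.
have HB2 : B * B <= A * C.
  destruct (Req_dec C 0) as [C0|C0].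
  - destruct (Req_dec B 0) as [B0|B0]. rewrite B0 C0; nra.
    exfalso. have := Hq (- (A + 1) / (2 * B)). rewrite C0.
    have -> : A + 2 * (- (A + 1) / (2 * B)) * B + - (A + 1) / (2 * B) * (- (A + 1) / (2 * B)) * 0 = -1.
      field. auto.
    lra.
  - have HC' : 0 < C by lra.
    have := Hq (- B / C).
    have -> : A + 2 * (- B / C) * B + - B / C * (- B / C) * C = (A * C - B * B) / C by field.
    move=> H. have : 0 <= (A * C - B * B) / C * C by apply Rmult_le_pos; lra.
    have -> : (A * C - B * B) / C * C = A * C - B * B by field.
    lra.
apply (Rle_trans _ (Rabs B)). apply Rle_abs.
rewrite -sqrt_mult //. rewrite -(sqrt_Rsqr_abs B). apply sqrt_le_1_alt. rewrite /Rsqr; lra.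
Qed.

Lemma vnorm_add n (v w : vec n) : vnorm (fun i => v i + w i) <= vnorm v + vnorm w.
Proof.
rewrite /vnorm.
have HA : 0 <= SUM n (fun i => v i * v i) by apply sum_ge0 => i; apply sq_ge0.
have HC : 0 <= SUM n (fun i => w i * w i) by apply sum_ge0 => i; apply sq_ge0.
rewrite -(sqrt_square (sqrt (SUM n (fun i => v i * v i)) + sqrt (SUM n (fun i => w i * w i)))); last first.
  have := sqrt_pos (SUM n (fun i => v i * v i)); have := sqrt_pos (SUM n (fun i => w i * w i)); lra.
apply sqrt_le_1_alt.
rewrite (sum_ext (fun i => (v i + w i) * (v i + w i))
              (fun i => v i * v i + (2 * (v i * w i) + w i * w i))); last by move=> i; ring.
rewrite !sum_add sum_scal.
have := cauchy v w.
have E1 := sqrt_sqrt _ HA. have E2 := sqrt_sqrt _ HC.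
nra.
Qed.

Lemma vdist_sym n (x y : vec n) : vdist x y = vdist y x.
Proof.
rewrite /vdist /vnorm. f_equal. apply sum_ext => i. ring.
Qed.

Lemma vdist_tri n (a b c : vec n) : vdist a c <= vdist a b + vdist b c.
Proof.
rewrite /vdist. have := vnorm_add (fun i => a i - b i) (fun i => b i - c i).
rewrite /vnorm. rewrite (sum_ext (fun i => (a i - b i + (b i - c i)) * (a i - b i + (b i - c i)))
  (fun i => (a i - c i) * (a i - c i))) //. move=> i; ring.
Qed.

Lemma vdist_ge0 n (a b : vec n) : 0 <= vdist a b.
Proof. apply sqrt_pos. Qed.

Lemma vdist_coord n (a b : vec n) i : Rabs (a i - b i) <= vdist a b.
Proof. exact: (coord_le (fun i => a i - b i)). Qed.

Definition hstep (n:nat) (eta:R) := 2 * eta / sqrt (INR n).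
Definition rnd n eta (y : vec n) : vec n :=
  fun i => hstep n eta * IZR (up (y i / hstep n eta - /2)).

Lemma hstep_pos n eta : (0 < n)%nat -> 0 < eta -> 0 < hstep n eta.
Proof.
move=> Hn He. rewrite /hstep. apply Rdiv_lt_0_compat. lra.
apply sqrt_lt_R0. apply lt_0_INR. lia.
Qed.

Lemma vnorm0 (v : vec 0) : vnorm v = 0.
Proof. by rewrite /vnorm big_ord0 sqrt_0. Qed.

Lemma rnd_spec n eta (y : vec n) : 0 < eta ->
  lattice eta (fun _ => True) (rnd eta y) /\ vdist (rnd eta y) y <= eta.
Proof.
move=> He. split.
  split => // i. eexists. reflexivity.
case: n y => [|n] y. rewrite /vdist vnorm0; lra.
set h := hstep n.+1 eta.
have Hh : 0 < h := hstep_pos n.+1 (ltac:(lia)) He.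
have Hterm : forall i, (rnd eta y i - y i) * (rnd eta y i - y i) <= eta * eta / INR n.+1.
  move=> i. rewrite /rnd -/h.
  have [A1 A2] := archimed (y i / h - / 2).
  set a := IZR (up (y i / h - / 2)) in A1 A2 *.
  have E : h * a - y i = h * (a - y i / h) by field; lra.
  rewrite E.
  have Hn : 0 < INR n.+1 by apply lt_0_INR; lia.
  have Hs := sqrt_lt_R0 _ Hn.
  have Hss := sqrt_sqrt _ (Rlt_le _ _ Hn).
  have Eh : eta * eta / INR n.+1 = (h / 2) * (h / 2).
    have : h / 2 * (h / 2) = eta * eta / (sqrt (INR n.+1) * sqrt (INR n.+1)).
      rewrite /h /hstep. field. lra.
    rewrite Hss. by move=> ->.
  rewrite Eh.
  have D1 : -/2 <= a - y i / h <= /2.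
    lra.
  have Hd : 0 <= (h / 2) * (h / 2) - (h * (a - y i / h)) * (h * (a - y i / h)).
    have -> : (h / 2) * (h / 2) - (h * (a - y i / h)) * (h * (a - y i / h)) =
      (h * h) * ((/2 - (a - y i / h)) * (/2 + (a - y i / h))) by field; lra.
    apply Rmult_le_pos. nra. nra.
  lra.
apply (Rle_trans _ (sqrt (eta * eta))); last by rewrite sqrt_square; lra.
apply sqrt_le_1_alt.
apply (Rle_trans _ (SUM n.+1 (fun _ => eta * eta / INR n.+1))).
  apply sum_le => i; exact: Hterm.
rewrite sum_const. right. field. apply not_0_INR. lia.
Qed.

Lemma phi_S nx nu (f : vec nx -> vec nu -> vec nx) x u m :
  phi f x u (S m) = f (phi f x u m) u.
Proof. reflexivity. Qed.

Lemma phi_lip nx nu (f : vec nx -> vec nu -> vec nx) Lx u a b :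
  0 <= Lx -> (forall x1 x2, vdist (f x1 u) (f x2 u) <= Lx * vdist x1 x2) ->
  forall p, vdist (phi f a u p) (phi f b u p) <= Lx ^ p * vdist a b.
Proof.
move=> HL Hf. elim => [|p IH]. rewrite /=; lra.
rewrite !phi_S /=. apply (Rle_trans _ _ _ (Hf _ _)).
rewrite Rmult_assoc. apply Rmult_le_compat_l => //.
Qed.

Lemma min_nat (P : nat -> Prop) : (exists k, P k) -> exists k, P k /\ forall j, P j -> Peano.le k j.
Proof.
move=> [k Hk]. elim/lt_wf_ind: k Hk => k IH Hk.
destruct (classic (exists j, Peano.lt j k /\ P j)) as [[j [Hj Pj]]|N].
- exact: IH j Hj Pj.
- exists k; split => // j Pj. destruct (Nat.le_gt_cases k j) => //. exfalso; apply N; eauto.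
Qed.

Lemma level_some nx (P : nat -> vec nx -> Prop) x k :
  level P x = Some k -> P k x /\ forall j, P j x -> Peano.le k j.
Proof.
rewrite /level. case: excluded_middle_informative => // H [<-].
apply (epsilon_spec (inhabits 0%nat) (fun k => P k x /\ forall j, P j x -> Peano.le k j)).
exact: min_nat.
Qed.

Lemma level_ex nx (P : nat -> vec nx -> Prop) x :
  (exists k, P k x) -> exists k, level P x = Some k.
Proof.
rewrite /level. case: excluded_middle_informative => // H _. eauto.
Qed.

Lemma level_none nx (P : nat -> vec nx -> Prop) x :
  level P x <> None -> exists k, P k x.
Proof.
rewrite /level. case: excluded_middle_informative => //.
Qed.

Lemma Piter_mono nx nu f Lx etax etau eps Mmax U XS XF k j x :
  Peano.le k j -> @Piter nx nu f Lx etax etau eps Mmax U XS XF k x -> Piter f Lx etax etau eps Mmax U XS XF j x.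
Proof.
elim => // m _ IH H. simpl. left. exact: IH.
Qed.

Lemma Piter_lattice nx nu f Lx etax etau eps Mmax U XS XF k x :
  @Piter nx nu f Lx etax etau eps Mmax U XS XF k x -> lattice etax (fun _ => True) x.
Proof.
elim: k x => [|k IH] x /=.
- move=> [_ H]. by split.
- move=> [H|[[_ H] _]]. exact: IH. by split.
Qed.

Lemma list_min (A : Type) (L : list A) (Q : A -> Prop) (g : A -> R) :
  (exists a, List.In a L /\ Q a) ->
  exists a, List.In a L /\ Q a /\ forall b, List.In b L -> Q b -> g a <= g b.
Proof.
elim: L => [|x L IH] [a [Ha Qa]] //.
destruct (classic (exists a, List.In a L /\ Q a)) as [E|N].
- have [b [Hb [Qb Mb]]] := IH E.
  destruct (classic (Q x)) as [Qx|NQx].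
  + destruct (Rle_lt_dec (g x) (g b)) as [Hl|Hl].
    * exists x; split; [left|split] => // c [<-|Hc] Qc. lra. have := Mb c Hc Qc; lra.
    * exists b; split; [right|split] => // c [<-|Hc] Qc. lra. exact: Mb.
  + exists b; split; [right|split] => // c [<-|Hc] Qc. done. exact: Mb.
- case: Ha => [Ha|Ha]; last by exfalso; apply N; eauto.
  subst. exists a; split; [left|split] => // c [<-|Hc] Qc. lra. exfalso; apply N; eauto.
Qed.

Lemma in_list (T : eqType) (x : T) (s : seq T) : x \in s -> List.In x s.
Proof.
elim: s => // a s IH. rewrite in_cons => /orP [/eqP ->|H]; [left|right] => //. exact: IH.
Qed.

Lemma nearest_ex n (P : vec n -> Prop) eta eps (y : vec n) : 0 < eta ->
  (forall z, P z -> lattice eta (fun _ => True) z) ->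
  (exists z, P z /\ vdist z y <= eps) -> exists z, Nearest P y z.
Proof.
move=> He Hlat [z0 [Pz0 Dz0]].
case: n P y z0 Pz0 Dz0 Hlat => [|n] P y z0 Pz0 Dz0 Hlat.
  exists z0; split => // z' _. rewrite /vdist !vnorm0; lra.
set h := hstep n.+1 eta.
have Hh : 0 < h := hstep_pos n.+1 (ltac:(lia)) He.
have Heps : 0 <= eps by have := vdist_ge0 z0 y; lra.
pose lo := fun i : 'I_n.+1 => (up ((y i - eps) / h) - 1)%Z.
pose s := 2 * eps / h + 1.
pose K := Z.to_nat (up s).
pose dec := fun F : {ffun 'I_n.+1 -> 'I_K.+1} => (fun i => h * IZR (lo i + Z.of_nat (F i)) : R).
have Cov : forall z, P z -> vdist z y <= eps -> exists F, List.In F (enum {ffun 'I_n.+1 -> 'I_K.+1}) /\ dec F = z.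
  move=> z Pz Dz.
  have [_ Hl] := Hlat z Pz.
  pose a := fun i => epsilon (inhabits 0%Z) (fun a => z i = h * IZR a).
  have Ha : forall i, z i = h * IZR (a i).
    move=> i. exact: (epsilon_spec (inhabits 0%Z) (fun a => z i = h * IZR a) (Hl i)).
  have Hb : forall i, (lo i <= a i)%Z /\ (a i - lo i < up s)%Z.
    move=> i. have := vdist_coord z y i. rewrite Ha => Hc.
    have [Hc1 Hc2] : - eps <= h * IZR (a i) - y i <= eps.
      split; [have := Rle_abs (- (h * IZR (a i) - y i)); rewrite Rabs_Ropp | have := Rle_abs (h * IZR (a i) - y i)]; lra.
    have [A1 A2] := archimed ((y i - eps) / h).
    have [S1 S2] := archimed s.
    have L1 : (y i - eps) / h <= IZR (a i).
      apply (Rmult_le_reg_r h) => //. field_simplify; lra.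
    have L2 : IZR (a i) <= (y i + eps) / h.
      apply (Rmult_le_reg_r h) => //. field_simplify; lra.
    have Es : (y i + eps) / h = (y i - eps) / h + 2 * eps / h by field; lra.
    split.
    + apply le_IZR. rewrite /lo minus_IZR. lra.
    + apply lt_IZR. rewrite /lo !minus_IZR. rewrite /s in S1 *. lra.
  exists [ffun i => inord (Z.to_nat (a i - lo i))].
  split. apply in_list. by rewrite mem_enum.
  apply functional_extensionality => i. rewrite /dec ffunE.
  have [B1 B2] := Hb i.
  rewrite inordK; last by rewrite /K; lia.
  rewrite Z2Nat.id; last lia.
  rewrite Ha. f_equal. f_equal. lia.
have [F0 [InF0 EF0]] := Cov z0 Pz0 Dz0.
have HQ : exists a, List.In a (enum {ffun 'I_n.+1 -> 'I_K.+1}) /\ (P (dec a) /\ vdist (dec a) y <= eps).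
  exists F0; by rewrite EF0.
have [F [InF [[PF DF] MF]]] := @list_min _ _ _ (fun F => vdist y (dec F)) HQ.
exists (dec F); split => // z' Pz'.
destruct (Rle_lt_dec (vdist z' y) eps) as [Hz|Hz].
- have [F' [InF' EF']] := Cov z' Pz' Hz. rewrite -EF'. apply MF => //. by rewrite EF'.
- rewrite (vdist_sym y z'). rewrite vdist_sym. lra.
Qed.

Theorem theorem1
  (nx nu : nat) (f : vec nx -> vec nu -> vec nx)
  (X0 : vec nx -> Prop) (U : vec nu -> Prop) (XS XF : vec nx -> Prop)
  (Lx etax etau eps : R) (Mmax : nat)
  (hX0 : compact_set X0) (hU : compact_set U) (hXS : compact_set XS) (hXF : compact_set XF)
  (hX0S : forall x, X0 x -> XS x) (hXFS : forall x, XF x -> XS x)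
  (hLx : 0 <= Lx)
  (hLip : forall x1 x2 u, U u -> vdist (f x1 u) (f x2 u) <= Lx * vdist x1 x2)
  (hetax : 0 < etax) (hetau : 0 < etau) (hMmax : Peano.le 1 Mmax)
  (heps : etax <= eps)
  (hX0PS : forall x, X0 x -> PS f Lx etax etau eps Mmax U XS XF x) :
  valid f (Cctrl f Lx etax etau eps Mmax U XS XF) X0 XS XF.
Proof.
move=> x kk us ms T [HX0 [Hk0 [Hstep Hterm]]].
set Pit := Piter f Lx etax etau eps Mmax U XS XF.
set Pt := PtS f Lx etax etau eps Mmax U XS XF.
have PtS_lat : forall z, Pt z -> lattice etax (fun _ => True) z.
  move=> z [k Hk]. exact: Piter_lattice Hk.
have near_d : forall y z, PS f Lx etax etau eps Mmax U XS XF y -> Nearest Pt y z -> vdist y z <= eps.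
  move=> y z [_ [z0 [P0 D0]]] [_ Hn]. have := Hn z0 P0. rewrite (vdist_sym y z0). lra.
have near : forall y, PS f Lx etax etau eps Mmax U XS XF y -> exists z, Nearest Pt y z.
  move=> y [_ [z0 [P0 D0]]]. apply: (@nearest_ex _ Pt etax eps y) => //. eauto.
have Key : forall l, executed T l -> forall xt, Nearest Pt (x (kk l)) xt ->
    Ctil f Lx etax etau eps Mmax U XS XF xt (us l) (ms l) ->
    PS f Lx etax etau eps Mmax U XS XF (x (kk (S l))) /\
    (forall k, Peano.le (kk l) k -> Peano.le k (kk (S l)) -> XS (x k)) /\
    (forall xt', Nearest Pt (x (kk (S l))) xt' -> lvl_lt (level Pit xt') (level Pit xt)).
  move=> l El xt Nxt [Pxt [[Hu _] [Hm1 [HmM [Hsucc HOA]]]]].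
  have [HC [Hkk Hdyn]] := Hstep l El.
  have PSl : PS f Lx etax etau eps Mmax U XS XF (x (kk l)) by case: HC.
  have D0 := near_d _ _ PSl Nxt.
  have Traj : forall p, Peano.le p (ms l) -> x (kk l + p)%nat = phi f (x (kk l)) (us l) p.
    elim => [|p IH] Hp. by rewrite addn0.
    rewrite addnS phi_S -IH; last lia. apply Hdyn; lia.
  have Dp : forall p, vdist (phi f (x (kk l)) (us l) p) (phi f xt (us l) p) <= Lx ^ p * eps.
    move=> p. apply: (Rle_trans _ _ _ (@phi_lip nx nu f Lx (us l) (x (kk l)) xt hLx (fun a b => hLip a b _ Hu) p)).
    apply Rmult_le_compat_l => //. by apply pow_le.
  have GAp : forall p z, Peano.le p (ms l) -> lattice etax (fun _ => True) z ->
      vdist z (x (kk l + p)%nat) <= etax -> GA f Lx etax eps xt (us l) p z.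
    move=> p z Hp Lz Dz. split => //.
    have := vdist_tri z (x (kk l + p)%nat) (phi f xt (us l) p).
    rewrite Traj //. rewrite Traj // in Dz. have := Dp p. lra.
  have Safe : forall p, Peano.le 1 p -> Peano.le p (ms l) -> XS (x (kk l + p)%nat).
    move=> p H1 H2.
    have := HOA (fun q => rnd etax (x (kk l + q)%nat)).
    case/(_ _ p H1 H2).
      move=> q Q1 Q2. have [R1 R2] := rnd_spec (x (kk l + q)%nat) hetax. exact: GAp.
    move=> [_ Hi] _. apply Hi. rewrite vdist_sym. have := (rnd_spec (x (kk l + p)%nat) hetax).2. lra.
  set y := x (kk (S l)).
  have Ey : y = x (kk l + ms l)%nat by rewrite /y Hkk.
  have [Rz1 Rz2] := rnd_spec y hetax.
  set z := rnd etax y in Rz1 Rz2.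
  have GAz : GA f Lx etax eps xt (us l) (ms l) z by apply GAp => //; rewrite -Ey.
  have Ptz : Pt z.
    have := Hsucc z GAz. case E: (level Pit z) => [k|] //= _.
    apply: level_none. by rewrite E.
  split; [|split].
  - split. rewrite Ey. apply Safe => //.
    exists z; split; [exact Ptz| lra].
  - move=> k K1 K2. have -> : k = (kk l + (k - kk l))%nat by lia.
    case E: (k - kk l)%nat => [|p]. rewrite addn0. by case: PSl.
    apply Safe; lia.
  - move=> xt' [P' N']. apply Hsucc. apply GAp => //. exact: PtS_lat.
    rewrite -Ey vdist_sym. have := N' z Ptz. rewrite (vdist_sym y z). lra.
have Term : forall y, PS f Lx etax etau eps Mmax U XS XF y ->
    (forall u m, ~ Cctrl f Lx etax etau eps Mmax U XS XF y u m) -> XF y.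
  move=> y PSy NC. have [z Nz] := near y PSy.
  have Dz := near_d _ _ PSy Nz.
  have [k Ek] := @level_ex nx Pit z Nz.1.
  have [Pk Mk] := @level_some _ _ _ _ Ek.
  rewrite /Pit in Pk Mk Ek. case: k Ek Pk Mk => [|j] Ek Pk Mk; simpl in Pk.
  - case: Pk => [[_ Hi] _]. apply Hi. exact Dz.
  - case: Pk => [Pj|[_ [u [m [Hu [H1 [H2 [Hsub HOA]]]]]]]].
      have := Mk j Pj. lia.
    exfalso. apply: (NC u m). split => //. exists z; split => //.
    split; first exact: Nz.1. do 4 (split => //).
    move=> xp Gxp. rewrite Ek.
    have [k' Ek'] := @level_ex nx Pit xp (ex_intro _ j (Hsub xp Gxp)).
    rewrite Ek' /=. have := (@level_some _ _ _ _ Ek').2 j (Hsub xp Gxp). lia.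
have NoInf : T = None -> False.
  move=> TN.
  have Ex : forall l, executed T l by move=> l; rewrite TN.
  have Ch : forall n l xt j, level Pit xt = Some j -> Peano.le j n -> Nearest Pt (x (kk l)) xt ->
      Ctil f Lx etax etau eps Mmax U XS XF xt (us l) (ms l) -> False.
    elim => [|n IH] l xt j Ej Hj Nxt Cxt;
    have [_ [_ Hlt]] := Key l (Ex l) xt Nxt Cxt;
    have [[_ [xt' [N' C']]] _] := Hstep (S l) (Ex (S l));
    have := Hlt xt' N'; rewrite Ej;
    case E': (level Pit xt') => [j'|] //= Hj'.
    + lia.
    + apply: (IH (S l) xt' j') => //. lia.
  have [[_ [xt [N0 C0]]] _] := Hstep 0%nat (Ex 0%nat).
  have [j Ej] := @level_ex nx Pit xt C0.1.
  exact: (Ch j 0%nat xt j Ej (le_n j) N0 C0).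
destruct T as [t|]; last by exfalso; apply NoInf.
have Exl : forall l, Peano.lt l t -> executed (Some t) l by [].
have Wit : forall l, Peano.lt l t -> exists xt, Nearest Pt (x (kk l)) xt /\ Ctil f Lx etax etau eps Mmax U XS XF xt (us l) (ms l).
  move=> l Hl. have [[_ W] _] := Hstep l (Exl l Hl). exact: W.
have PSt : PS f Lx etax etau eps Mmax U XS XF (x (kk t)).
  destruct (Nat.eq_dec t 0) as [Et|Hn].
    rewrite Et Hk0. exact: hX0PS.
  have [l El] : exists l, t = S l by exists (t - 1)%nat; lia.
  have Hl : Peano.lt l t by lia.
  have [xt [N0 C0]] := Wit l Hl.
  rewrite El. exact: (Key l (Exl l Hl) xt N0 C0).1.
exists t. split; [move=> t' [<-]; lia|split].
  apply Term => //. exact: Hterm.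
have Sf : forall l, Peano.le l t -> forall k, Peano.le k (kk l) -> XS (x k).
  elim => [|l IH] Hl k Hk.
    have -> : k = 0%nat by rewrite Hk0 in Hk; lia.
    exact: hX0S.
  have [xt [N0 C0]] := Wit l Hl.
  have [_ [HS _]] := Key l (Exl l Hl) xt N0 C0.
  destruct (Nat.le_gt_cases k (kk l)) as [K1|K1].
    apply IH => //. lia.
  apply HS; lia.
exact: Sf t (le_n t).
Qed.
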